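(* Let ${\mathbf{x}}_1,\dots,{\mathbf{x}}_T\in\mathbb{R}^N$ with ${\mathbf{C}}_{xx}:=\frac1T\sum_{t=1}^T{\mathbf{x}}_t{\mathbf{x}}_t^\top$ positive definite, and let ${\mathbf{W}}=[{\mathbf{w}}_1,\dots,{\mathbf{w}}_K]\in\mathbb{R}^{N\times K}$ have unit-norm columns with $\operatorname{span}\{{\mathbf{w}}_1{\mathbf{w}}_1^\top,\dots,{\mathbf{w}}_K{\mathbf{w}}_K^\top\}={\mathbb{S}}^N$. For ${\mathbf{y}}_1,\dots,{\mathbf{y}}_T\in\mathbb{R}^N$ and ${\mathbf{g}}\in\mathbb{R}^K$ define $$L({\mathbf{y}}_1,\dots,{\mathbf{y}}_T,{\mathbf{g}}):=\frac1T\sum_{t=1}^T\Big(\|{\mathbf{x}}_t-{\mathbf{y}}_t\|_2^2+\sum_{i=1}^K g_i\big\{({\mathbf{w}}_i^\top{\mathbf{y}}_t)^2-1\big\}\Big).$$ Let ${\mathbf{y}}_t^\ast:={\mathbf{C}}_{xx}^{-1/2}{\mathbf{x}}_t$ and let ${\mathbf{g}}^\ast\in\mathbb{R}^K$ be any vector with ${\mathbf{I}}_N+{\mathbf{W}}\operatorname{diag}({\mathbf{g}}^\ast){\mathbf{W}}^\top={\mathbf{C}}_{xx}^{1/2}$ (such a vector exists). Then $({\mathbf{y}}_1^\ast,\dots,{\mathbf{y}}_T^\ast,{\mathbf{g}}^\ast)$ is a saddle point of $L$: $$L({\mathbf{y}}^\ast_{1:T},{\mathbf{g}})\le L({\mathbf{y}}^\ast_{1:T},{\mathbf{g}}^\ast)\le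 L({\mathbf{y}}_{1:T},{\mathbf{g}}^\ast)\quad\text{for all }{\mathbf{y}}_1,\dots,{\mathbf{y}}_T\in\mathbb{R}^N,\ {\mathbf{g}}\in\mathbb{R}^K,$$ and consequently $$\min_{{\mathbf{y}}_1,\dots,{\mathbf{y}}_T}\max_{{\mathbf{g}}}L=\max_{{\mathbf{g}}}\min_{{\mathbf{y}}_1,\dots,{\mathbf{y}}_T}L=L({\mathbf{y}}^\ast_{1:T},{\mathbf{g}}^\ast).$$ Moreover, ${\mathbf{y}}_{1:T}\mapsto L({\mathbf{y}}_{1:T},{\mathbf{g}}^\ast)$ is strictly convex with unique minimizer ${\mathbf{y}}^\ast_{1:T}$.
   Context: ${\mathbb{S}}^N$ is the space of $N\times N$ real symmetric matrices; $\operatorname{diag}({\mathbf{g}})$ is the diagonal matrix with diagonal ${\mathbf{g}}$; ${\mathbf{C}}_{xx}^{1/2}$ is the symmetric positive definite square root and ${\mathbf{C}}_{xx}^{-1/2}$ its inverse. *)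

(* Defs.v *)
From HB Require Import structures.
From mathcomp Require Import all_boot all_order all_algebra.
From mathcomp Require Import all_classical all_reals.
From mathcomp Require Import ereal.
Set Implicit Arguments. Unset Strict Implicit. Unset Printing Implicit Defensive.
Import Order.TTheory GRing.Theory Num.Theory.
Local Open Scope ring_scope.

Section Defs.
Variable R : realType.

Definition sqnorm (N : nat) (v : 'cV[R]_N) : R := \sum_(n < N) v n 0 ^+ 2.

Definition posdef (N : nat) (A : 'M[R]_N) : Prop :=
  A^T = A /\ forall v : 'cV[R]_N, v != 0 -> 0 < (v^T *m A *m v) 0 0.

Definition Cxx (N T : nat) (x : 'I_T -> 'cV[R]_N) : 'M[R]_N :=
  (T%:R)^-1 *: \sum_(t < T) (x t *m (x t)^T).

Definition is_psd_sqrt (N : nat) (A S : 'M[R]_N) : Prop :=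
  posdef S /\ S *m S = A.

(* the objective L(y_1..y_T, g); w_i = col i W, g_i = g 0 i *)
Definition Lobj (N T K : nat) (x : 'I_T -> 'cV[R]_N) (W : 'M[R]_(N, K))
  (y : 'I_T -> 'cV[R]_N) (g : 'rV[R]_K) : R :=
  (T%:R)^-1 * \sum_(t < T)
     (sqnorm (x t - y t)
      + \sum_(i < K) g 0 i * ((((col i W)^T *m y t) 0 0) ^+ 2 - 1)).

Definition maxg_L (N T K : nat) (x : 'I_T -> 'cV[R]_N) (W : 'M[R]_(N, K))
  (y : 'I_T -> 'cV[R]_N) : \bar R :=
  ereal_sup [set (Lobj x W y g)%:E | g in [set: 'rV[R]_K]].

Definition miny_L (N T K : nat) (x : 'I_T -> 'cV[R]_N) (W : 'M[R]_(N, K))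
  (g : 'rV[R]_K) : \bar R :=
  ereal_inf [set (Lobj x W y g)%:E | y in [set: 'I_T -> 'cV[R]_N]].

End Defs.

(* Main.v *)
Require Import Defs.
From HB Require Import structures.
From mathcomp Require Import all_boot all_order all_algebra.
From mathcomp Require Import all_classical all_reals.
From mathcomp Require Import ereal.
From mathcomp Require Import ring lra.
Set Implicit Arguments. Unset Strict Implicit. Unset Printing Implicit Defensive.
Import Order.TTheory GRing.Theory Num.Theory.
Local Open Scope ring_scope.

Definition dotp (R : realType) (N : nat) (u v : 'cV[R]_N) : R := (u^T *m v) 0 0.

Lemma dotpE (R : realType) N (u v : 'cV[R]_N) : dotp u v = \sum_(n < N) u n 0 * v n 0.
Proof. by rewrite /dotp mxE; apply: eq_bigr => n _; rewrite mxE. Qed.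

Lemma dotpC (R : realType) N (u v : 'cV[R]_N) : dotp u v = dotp v u.
Proof. by rewrite !dotpE; apply: eq_bigr => n _; rewrite mulrC. Qed.

Lemma dotpDl (R : realType) N (u v w : 'cV[R]_N) : dotp (u + v) w = dotp u w + dotp v w.
Proof. by rewrite !dotpE -big_split; apply: eq_bigr => n _; rewrite !mxE mulrDl. Qed.

Lemma dotpBl (R : realType) N (u v w : 'cV[R]_N) : dotp (u - v) w = dotp u w - dotp v w.
Proof. by rewrite !dotpE -sumrB; apply: eq_bigr => n _; rewrite !mxE mulrBl. Qed.

Lemma dotpZl (R : realType) N a (u w : 'cV[R]_N) : dotp (a *: u) w = a * dotp u w.
Proof. by rewrite !dotpE mulr_sumr; apply: eq_bigr => n _; rewrite !mxE mulrA. Qed.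

Lemma dotpDr (R : realType) N (u v w : 'cV[R]_N) : dotp w (u + v) = dotp w u + dotp w v.
Proof. by rewrite !(dotpC w) dotpDl. Qed.
Lemma dotpBr (R : realType) N (u v w : 'cV[R]_N) : dotp w (u - v) = dotp w u - dotp w v.
Proof. by rewrite !(dotpC w) dotpBl. Qed.
Lemma dotpZr (R : realType) N a (u w : 'cV[R]_N) : dotp w (a *: u) = a * dotp w u.
Proof. by rewrite !(dotpC w) dotpZl. Qed.

Lemma dotpNl (R : realType) N (u w : 'cV[R]_N) : dotp (- u) w = - dotp u w.
Proof. by rewrite !dotpE -sumrN; apply: eq_bigr => n _; rewrite !mxE mulNr. Qed.
Lemma dotpNr (R : realType) N (u w : 'cV[R]_N) : dotp w (- u) = - dotp w u.
Proof. by rewrite !(dotpC w) dotpNl. Qed.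

Lemma sqnormE (R : realType) N (v : 'cV[R]_N) : sqnorm v = dotp v v.
Proof. by rewrite dotpE; apply: eq_bigr => n _; rewrite expr2. Qed.

Lemma dotp_symm (R : realType) N (S : 'M[R]_N) (u v : 'cV[R]_N) :
  S^T = S -> dotp u (S *m v) = dotp (S *m u) v.
Proof.
by move=> hS; rewrite /dotp trmx_mul hS mulmxA.
Qed.

Lemma tr11 (R : realType) (A : 'M[R]_1) : A^T 0 0 = A 0 0.
Proof. by rewrite mxE. Qed.

Lemma colW_dot (R : realType) N K (W : 'M[R]_(N, K)) i (y : 'cV[R]_N) :
  ((col i W)^T *m y) 0 0 = (W^T *m y) i 0.
Proof. by rewrite tr_col -row_mul mxE. Qed.

Lemma gsum_form (R : realType) N K (W : 'M[R]_(N, K)) (g : 'rV[R]_K) (y : 'cV[R]_N) :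
  \sum_(i < K) g 0 i * ((((col i W)^T *m y) 0 0) ^+ 2 - 1)
  = dotp y ((W *m diag_mx g *m W^T) *m y) - \sum_(i < K) g 0 i.
Proof.
have -> : dotp y ((W *m diag_mx g *m W^T) *m y)
   = ((W^T *m y)^T *m diag_mx g *m (W^T *m y)) 0 0.
  by rewrite /dotp trmx_mul trmxK !mulmxA.
rewrite mul_mx_diag mxE -sumrB; apply: eq_bigr => i _.
by rewrite colW_dot !mxE; ring.
Qed.

Lemma diag_sum (R : realType) N K (W : 'M[R]_(N, K)) (c : 'rV[R]_K) :
  W *m diag_mx c *m W^T = \sum_(i < K) c 0 i *: (col i W *m (col i W)^T).
Proof.
apply/matrixP => k j; rewrite mul_mx_diag !mxE summxE; apply: eq_bigr => i _.
by rewrite !mxE big_ord1 !mxE mulrA (mulrC (W k i)).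
Qed.

Lemma qform_ge0 (R : realType) N (S : 'M[R]_N) (v : 'cV[R]_N) :
  posdef S -> 0 <= dotp v (S *m v).
Proof.
move=> [_ hS]; have [->|nz] := eqVneq v 0; first by rewrite /dotp !mulmx0 mxE.
by rewrite /dotp mulmxA; apply: ltW; apply: hS.
Qed.

Lemma qform_gt0 (R : realType) N (S : 'M[R]_N) (v : 'cV[R]_N) :
  posdef S -> v != 0 -> 0 < dotp v (S *m v).
Proof. by move=> [_ hS] nz; rewrite /dotp mulmxA; apply/hS. Qed.

Lemma posdef_unit (R : realType) N (S : 'M[R]_N) : posdef S -> S \in unitmx.
Proof.
move=> hP; rewrite -row_free_unit -kermx_eq0; apply/negPn/negP => hK.
set Km := kermx S in hK.
have [i hi] : exists i, row i Km != 0.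
  apply/existsP; apply: contraR hK => /existsPn hr.
  by apply/eqP/row_matrixP => i; rewrite row0; apply/eqP/negPn/hr.
have hKS : Km *m S = 0 by apply/sub_kermxP.
have hv : (row i Km)^T != 0 by rewrite -trmx0 (inj_eq trmx_inj).
have := qform_gt0 hP hv.
have -> : S *m (row i Km)^T = 0.
  by rewrite -{1}hP.1 -trmx_mul -row_mul hKS row0 trmx0.
by rewrite /dotp mulmx0 mxE ltxx.
Qed.

Lemma point_id (R : realType) N (S : 'M[R]_N) (x y ys : 'cV[R]_N) :
  S^T = S -> S *m ys = x ->
  sqnorm (x - y) + dotp y ((S - 1%:M) *m y)
  = sqnorm (x - ys) + dotp ys ((S - 1%:M) *m ys) + dotp (y - ys) (S *m (y - ys)).
Proof.
move=> hS hx; rewrite !sqnormE !mulmxBl !mul1mx mulmxBr.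
rewrite !(dotpBl, dotpBr) (dotp_symm ys y hS) hx (dotpC x ys) (dotpC y x); ring.
Qed.

Lemma Lobj_gs (R : realType) N T K (x : 'I_T -> 'cV[R]_N) (W : 'M[R]_(N, K))
  (S : 'M[R]_N) (gs : 'rV[R]_K) (ys y : 'I_T -> 'cV[R]_N) :
  S^T = S -> (forall t, S *m ys t = x t) ->
  1%:M + W *m diag_mx gs *m W^T = S ->
  Lobj x W y gs = Lobj x W ys gs
     + T%:R^-1 * \sum_(t < T) dotp (y t - ys t) (S *m (y t - ys t)).
Proof.
move=> hS hx hg; rewrite /Lobj -mulrDr -big_split /=; congr (_ * _).
apply: eq_bigr => t _; rewrite !gsum_form.
have -> : W *m diag_mx gs *m W^T = S - 1%:M by rewrite -hg addrAC subrr add0r.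
have := point_id (y t) hS (hx t); lra.
Qed.

Lemma qform_comb (R : realType) N (S : 'M[R]_N) (u v : 'cV[R]_N) (a : R) :
  S^T = S ->
  dotp (a *: u + (1 - a) *: v) (S *m (a *: u + (1 - a) *: v))
  = a * dotp u (S *m u) + (1 - a) * dotp v (S *m v) - a * (1 - a) * dotp (u - v) (S *m (u - v)).
Proof.
move=> hS; rewrite !(mulmxDr, mulmxBr, mulmxN) -!scalemxAr.
rewrite !(dotpDl, dotpDr, dotpBl, dotpBr, dotpZl, dotpZr, dotpNl, dotpNr) (dotp_symm v u hS) (dotpC (S *m v)); ring.
Qed.

Lemma sum_ys (R : realType) N T K (x : 'I_T -> 'cV[R]_N) (W : 'M[R]_(N, K))
  (S : 'M[R]_N) (i : 'I_K) :
  S^T = S -> S \in unitmx -> S *m S = Cxx x -> sqnorm (col i W) = 1 ->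
  \sum_(t < T) (((col i W)^T *m (invmx S *m x t)) 0 0) ^+ 2 = T%:R.
Proof.
move=> hS hU hC hw.
case: T x hC => [|T] x hC; first by rewrite big_ord0.
set w := col i W.
have e1 : forall t, (((w^T *m (invmx S *m x t)) 0 0) ^+ 2)
   = (w^T *m ((invmx S *m x t) *m (invmx S *m x t)^T) *m w) 0 0.
  move=> t; move: (invmx S *m x t) => v.
  rewrite [in RHS]mulmxA -[in RHS](mulmxA (w^T *m v)) [in RHS]mxE big_ord1 expr2; congr (_ * _).
  have -> : v^T *m w = (w^T *m v)^T by rewrite trmx_mul trmxK.
  by rewrite tr11.
under eq_bigr do rewrite e1.
rewrite -summxE -mulmx_suml -mulmx_sumr.
have -> : \sum_(t < T.+1) (invmx S *m x t) *m (invmx S *m x t)^T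
   = invmx S *m (\sum_(t < T.+1) x t *m (x t)^T) *m invmx S.
  rewrite mulmx_sumr mulmx_suml; apply: eq_bigr => t _.
  by rewrite trmx_mul trmx_inv hS !mulmxA.
have -> : \sum_(t < T.+1) x t *m (x t)^T = T.+1%:R *: Cxx x.
  by rewrite /Cxx scalerA mulfV ?scale1r // pnatr_eq0.
rewrite -hC -scalemxAr -scalemxAl mulmxA mulVmx // mul1mx mulmxV //.
rewrite -scalemxAr -scalemxAl mulmx1 mxE -/(dotp w w) -sqnormE hw mulr1 //.
Qed.

Lemma Lobj_ys (R : realType) N T K (x : 'I_T -> 'cV[R]_N) (W : 'M[R]_(N, K))
  (S : 'M[R]_N) (g : 'rV[R]_K) :
  S^T = S -> S \in unitmx -> S *m S = Cxx x -> (forall i, sqnorm (col i W) = 1) ->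
  Lobj x W (fun t => invmx S *m x t) g = T%:R^-1 * \sum_(t < T) sqnorm (x t - invmx S *m x t).
Proof.
move=> hS hU hC hw; rewrite /Lobj big_split /= [X in _ + X]exchange_big /=.
rewrite [X in _ + X]big1 ?addr0 // => i _.
rewrite -mulr_sumr sumrB sum_ys // sumr_const card_ord subrr mulr0 //.
Qed.

Theorem mainTheorem4 (R : realType) (N T K : nat)
  (x : 'I_T -> 'cV[R]_N) (W : 'M[R]_(N, K)) (S : 'M[R]_N) :
  posdef (Cxx x) ->
  (forall i : 'I_K, sqnorm (col i W) = 1) ->
  (forall A : 'M[R]_N, A^T = A ->
     exists c : 'rV[R]_K, A = \sum_(i < K) c 0 i *: (col i W *m (col i W)^T)) ->
  is_psd_sqrt (Cxx x) S ->
  let ystar := fun t : 'I_T => invmx S *m x t in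
  (exists g : 'rV[R]_K, 1%:M + W *m diag_mx g *m W^T = S) /\
  forall gstar : 'rV[R]_K, 1%:M + W *m diag_mx gstar *m W^T = S ->
    [/\ (forall (y : 'I_T -> 'cV[R]_N) (g : 'rV[R]_K),
           Lobj x W ystar g <= Lobj x W ystar gstar /\
           Lobj x W ystar gstar <= Lobj x W y gstar),
        ereal_inf [set maxg_L x W y | y in [set: 'I_T -> 'cV[R]_N]]
          = (Lobj x W ystar gstar)%:E,
        ereal_sup [set miny_L x W g | g in [set: 'rV[R]_K]]
          = (Lobj x W ystar gstar)%:E,
        (forall (y y' : 'I_T -> 'cV[R]_N) (a : R), y <> y' -> 0 < a < 1 ->
           Lobj x W (fun t => a *: y t + (1 - a) *: y' t) gstar
             < a * Lobj x W y gstar + (1 - a) * Lobj x W y' gstar) &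
        (forall y : 'I_T -> 'cV[R]_N,
           (forall y' : 'I_T -> 'cV[R]_N, Lobj x W y gstar <= Lobj x W y' gstar) ->
           y = ystar)].
Proof.
move=> hP hw hspan [hSP hC] ystar.
have hS : S^T = S := hSP.1.
have hU := posdef_unit hSP.
split.
  have hsym : (S - 1%:M)^T = S - 1%:M by rewrite linearB /= hS trmx1.
  have [c hc] := hspan (S - 1%:M) hsym.
  by exists c; rewrite diag_sum -hc addrC subrK.
move=> gs hgs.
have hx : forall t, S *m ystar t = x t.
  by move=> t; rewrite /ystar mulmxA mulmxV // mul1mx.
have hL := fun y => Lobj_gs y hS hx hgs.
have hconst : forall g, Lobj x W ystar g = Lobj x W ystar gs.
  by move=> g; rewrite /ystar !Lobj_ys.
have hge : forall y, Lobj x W ystar gs <= Lobj x W y gs.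
  move=> y; rewrite (hL y) lerDl; apply: mulr_ge0; first by rewrite invr_ge0 ler0n.
  by apply: sumr_ge0 => t _; apply: qform_ge0.
have hpos : forall z : 'I_T -> 'cV[R]_N, (exists t, z t != 0) ->
    0 < T%:R^-1 * \sum_(t < T) dotp (z t) (S *m z t).
  move=> z [t ht]; apply: mulr_gt0.
    by rewrite invr_gt0 ltr0n; apply: leq_ltn_trans (ltn_ord t).
  rewrite (bigD1 t) //=; apply: (@lt_le_trans _ _ (dotp (z t) (S *m z t))).
    exact: qform_gt0.
  rewrite lerDl; by apply: sumr_ge0 => i _; apply: qform_ge0.
have hneq : forall y y' : 'I_T -> 'cV[R]_N, y <> y' -> exists t, y t - y' t != 0.
  move=> y y' hyy'; case: (pselect (exists t, y t - y' t != 0)) => // hn.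
  exfalso; apply: hyy'; apply: funext => t; apply/eqP; rewrite -subr_eq0.
  by apply/negPn/negP => ht; apply: hn; exists t.
split.
- by move=> y g; split; [rewrite hconst | exact: hge].
- apply/le_anti/andP; split.
    apply: le_trans (_ : maxg_L x W ystar <= _)%E.
      by apply: ereal_inf_lbound; exists ystar.
    by apply: ge_ereal_sup => _ [g _ <-]; rewrite lee_fin hconst.
  apply: le_ereal_inf_tmp => _ [y _ <-].
  apply: le_trans (_ : (Lobj x W y gs)%:E <= _)%E; first by rewrite lee_fin.
  by apply: ereal_sup_ubound; exists gs.
- apply/le_anti/andP; split.
    apply: ge_ereal_sup => _ [g _ <-].
    apply: le_trans (_ : (Lobj x W ystar g)%:E <= _)%E; last by rewrite lee_fin hconst.
    by apply: ereal_inf_lbound; exists ystar.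
  apply: le_trans (_ : miny_L x W gs <= _)%E; last by apply: ereal_sup_ubound; exists gs.
  by apply: le_ereal_inf_tmp => _ [y _ <-]; rewrite lee_fin.
- move=> y y' a hyy' ha.
  have := hpos (fun t => y t - y' t) (hneq _ _ hyy').
  have e : forall t, dotp ((fun t => a *: y t + (1 - a) *: y' t) t - ystar t)
      (S *m ((fun t => a *: y t + (1 - a) *: y' t) t - ystar t))
    = a * dotp (y t - ystar t) (S *m (y t - ystar t))
      + (1 - a) * dotp (y' t - ystar t) (S *m (y' t - ystar t))
      - a * (1 - a) * dotp (y t - y' t) (S *m (y t - y' t)).
    move=> t /=.
    have -> : a *: y t + (1 - a) *: y' t - ystar t
      = a *: (y t - ystar t) + (1 - a) *: (y' t - ystar t).
      by rewrite !scalerBr addrACA -opprD -scalerDl (addrC a) subrK scale1r.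
    rewrite qform_comb //.
    by have -> : y t - ystar t - (y' t - ystar t) = y t - y' t by rewrite opprB addrA subrK.
  rewrite (hL y) (hL y') (hL (fun t => a *: y t + (1 - a) *: y' t)) (eq_bigr _ (fun t _ => e t)).
  rewrite sumrB big_split /= -!mulr_sumr => hp.
  case/andP: ha => ha0 ha1.
  have hb : 0 < a * (1 - a) by apply: mulr_gt0; rewrite ?subr_gt0.
  move: hp; set C := \sum_(t < T) dotp (y t - y' t) _.
  set A := \sum_(t < T) dotp (y t - ystar t) _.
  set B := \sum_(t < T) dotp (y' t - ystar t) _.
  set L0 := Lobj x W ystar gs; set Ti := T%:R^-1 => hp.
  rewrite -subr_gt0.
  have -> : a * (L0 + Ti * A) + (1 - a) * (L0 + Ti * B) -
     (L0 + Ti * (a * A + (1 - a) * B - a * (1 - a) * C))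
     = a * (1 - a) * (Ti * C) by ring.
  exact: mulr_gt0.
- move=> y hmin; case: (pselect (y = ystar)) => // hne; exfalso.
  have := hmin ystar; rewrite (hL y) -subr_ge0 opprD addrA subrr add0r oppr_ge0.
  by rewrite leNgt (hpos _ (hneq _ _ hne)).
Qed.
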